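(* Let $k$ be any field, let $d_1,\ldots,d_n$ be positive integers, let $A=k[x_1, \ldots, x_n]/(x_1^{d_1}, \ldots, x_n^{d_n})$ and $t = \sum_{i=1}^n (d_i - 1)$. If $m\ge 0$ is an integer with $\max(d_1, \ldots, d_n)>(t+m)/2$, then for all integers $0\le i \le (t-m)/2$ the map $A_i \to A_{i+m}$ given by $f \mapsto f \cdot (x_1+ \dots + x_n)^m$ is injective.
   Context: $A$ is graded by degree, $A=\bigoplus_{i\ge 0}A_i$, with $A_i$ the image of the homogeneous polynomials of degree $i$. *)

(* Defs.v *)
From mathcomp Require Import all_boot all_algebra.
From mathcomp Require Import mpoly.
Set Implicit Arguments. Unset Strict Implicit. Unset Printing Implicit Defensive.
Import GRing.Theory.
Local Open Scope ring_scope.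

Definition in_power_ideal (k : fieldType) (n : nat) (d : 'I_n -> nat)
  (p : {mpoly k[n]}) : Prop :=
  exists g : 'I_n -> {mpoly k[n]}, p = \sum_(j < n) g j * 'X_j ^+ d j.

Definition lin_sum (k : fieldType) (n : nat) : {mpoly k[n]} := \sum_(j < n) 'X_j.

(* Main.v *)
Require Import Defs.
From mathcomp Require Import all_boot all_algebra.
From mathcomp Require Import mpoly.
From mathcomp Require Import zify.
Set Implicit Arguments. Unset Strict Implicit. Unset Printing Implicit Defensive.
Import GRing.Theory.
Local Open Scope ring_scope.

Section S.
Variables (k : fieldType) (n : nat).
Implicit Types (p : {mpoly k[n]}) (m : 'X_{1..n}).

Lemma coefMX p m kk : (p * 'X_[m])@_kk = if (m <= kk)%MM then p@_(kk - m)%MM else 0.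
Proof.
case: ifP => h.
  by rewrite -{1}(submK h) [(kk - m + m)%MM]addmC mcoeffMX.
apply/eqP; rewrite mcoeff_eq0 (perm_mem (msuppMX p m)).
apply/negP => /mapP [m' _ E]; move: h; rewrite E lem_addr //.
Qed.

Lemma ip_coef0 (d : 'I_n -> nat) p : in_power_ideal d p ->
  forall mu : 'X_{1..n}, (forall j, mu j < d j)%N -> p@_mu = 0.
Proof.
move=> [g ->] mu hmu; rewrite raddf_sum big1 // => j _.
rewrite /= mpolyXn coefMX; case: ifP => // /mnm_lepP /(_ j).
rewrite mulmnE mnm1E eqxx mul1n => h; have := hmu j; lia.
Qed.

Lemma ip_add (d : 'I_n -> nat) p q : in_power_ideal d p -> in_power_ideal d q ->
  in_power_ideal d (p + q).
Proof.
move=> [g1 ->] [g2 ->]; exists (fun j => g1 j + g2 j).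
by rewrite -big_split /=; apply: eq_bigr => j _; rewrite mulrDl.
Qed.

Lemma ip_0 (d : 'I_n -> nat) : in_power_ideal d (0 : {mpoly k[n]}).
Proof. by exists (fun _ => 0); rewrite big1 // => j _; rewrite mul0r. Qed.

Lemma ip_mon (d : 'I_n -> nat) (c : k) (mu : 'X_{1..n}) (j : 'I_n) : (d j <= mu j)%N ->
  in_power_ideal d (c *: 'X_[mu]).
Proof.
move=> h.
exists (fun j' => (j' == j)%:R * (c *: 'X_[mu - U_(j) *+ d j]%MM)).
rewrite (bigD1 j) //= big1 ?addr0 => [|j' /negbTE ->]; last by rewrite !mul0r.
rewrite eqxx mul1r -scalerAl mpolyXn -mpolyXD submK //.
apply/mnm_lepP => i; rewrite mulmnE mnm1E; case: eqP => [<-|]; lia.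
Qed.


Definition jfree (d : 'I_n -> nat) (j0 : 'I_n) (nu : 'X_{1..n}) :=
  [forall j, (j != j0) ==> (nu j < d j)%N].

Lemma jfreeP (d : 'I_n -> nat) (j0 : 'I_n) (nu : 'X_{1..n}) : reflect (forall j, j != j0 -> (nu j < d j)%N) (jfree d j0 nu).
Proof.
apply: (iffP forallP) => h j; first by move=> hj; move/implyP: (h j); apply.
by apply/implyP; apply: h.
Qed.

Lemma step (d : 'I_n -> nat) (j0 : 'I_n) (p : {mpoly k[n]}) (nu : 'X_{1..n}) a : jfree d j0 nu -> nu j0 = a ->
 (forall nu', jfree d j0 nu' -> (a < nu' j0)%N -> p@_nu' = 0) ->
 (p * lin_sum k n)@_(nu + U_(j0))%MM = p@_nu /\
 (forall nu', jfree d j0 nu' -> (a.+1 < nu' j0)%N -> (p * lin_sum k n)@_nu' = 0).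
Proof.
move=> /jfreeP hnu ha hz; rewrite /lin_sum mulr_sumr; split.
  rewrite raddf_sum (bigD1 j0) //= coefMX lem_addl addmK big1 ?addr0 // => j hj.
  rewrite coefMX; case: ifP => // _; apply: hz.
    apply/jfreeP => j' hj'; rewrite mnmBE mnmDE !mnm1E eq_sym (negbTE hj').
    have := hnu j' hj'; case: (j == j'); lia.
  rewrite mnmBE mnmDE !mnm1E eqxx (negbTE hj); lia.
move=> nu' /jfreeP hnu' hlt; rewrite raddf_sum big1 // => j _ /=.
rewrite coefMX; case: ifP => // _; apply: hz.
  apply/jfreeP => j' hj'; rewrite mnmBE mnm1E.
  have := hnu' j' hj'; case: (j == j'); lia.
rewrite mnmBE mnm1E; case: (j == j0); lia.
Qed.


Lemma iterL (d : 'I_n -> nat) (j0 : 'I_n) (h : {mpoly k[n]}) (nu : 'X_{1..n}) a :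
 jfree d j0 nu -> nu j0 = a ->
 (forall nu', jfree d j0 nu' -> (a < nu' j0)%N -> h@_nu' = 0) ->
 forall r, (h * lin_sum k n ^+ r)@_(nu + U_(j0) *+ r)%MM = h@_nu /\
 (forall nu', jfree d j0 nu' -> (a + r < nu' j0)%N -> (h * lin_sum k n ^+ r)@_nu' = 0).
Proof.
move=> hnu ha hz; elim=> [|r [IH1 IH2]].
  have -> : (nu + U_(j0) *+ 0)%MM = nu.
    by apply/mnmP => i; rewrite mnmDE mulmnE muln0 addn0.
  by rewrite expr0 mulr1; split => // nu' h1 h2; apply: hz => //; rewrite -(addn0 a).
have hf : jfree d j0 (nu + U_(j0) *+ r)%MM.
  apply/jfreeP => j hj; rewrite mnmDE mulmnE mnm1E eq_sym (negbTE hj) mul0n addn0.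
  by move/jfreeP: hnu; apply.
have hr : (nu + U_(j0) *+ r)%MM j0 = (a + r)%N by rewrite mnmDE mulmnE mnm1E eqxx mul1n ha.
have [S1 S2] := step hf hr IH2.
have -> : (nu + U_(j0) *+ r.+1)%MM = ((nu + U_(j0) *+ r) + U_(j0))%MM.
  apply/mnmP => i; rewrite !mnmDE !mulmnE mnm1E; case: (j0 == i) => /=; lia.
by rewrite exprSr mulrA S1 IH1; split => // nu' h1 h2; apply: S2 => //; lia.
Qed.

End S.

Unset Implicit Arguments.
Theorem theorem2p5 (k : fieldType) (n : nat) (d : 'I_n -> nat)
    (hd : forall j, (0 < d j)%N) (m : nat)
    (hmax : ((\sum_(j < n) (d j - 1)) + m < 2 * \max_(j < n) d j)%N)
    (i : nat) (hi : (2 * i + m <= \sum_(j < n) (d j - 1))%N)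
    (f g : {mpoly k[n]}) (hf : f \is i.-homog) (hg : g \is i.-homog) :
  in_power_ideal d (f * lin_sum k n ^+ m - g * lin_sum k n ^+ m) ->
  in_power_ideal d (f - g).
Proof.
move=> HI0.
have [j0 hj0] : exists j0, \max_(j < n) d j = d j0.
  case: (posnP #|'I_n|) => [c0|cpos]; last first.
    by have [j0 e] := eq_bigmax d cpos; exists j0.
  exfalso; have : \max_(j < n) d j = 0%N.
    apply/eqP; rewrite -leqn0; apply/bigmax_leqP => j _.
    move: c0; rewrite card_ord => n0; have := ltn_ord j; lia.
  move=> e; rewrite e in hmax; lia.
have hiD : (i + m < d j0)%N by rewrite hj0 in hmax; lia.
set h := f - g.
have hh : h \is i.-homog by rewrite rpredB.
have HI : in_power_ideal d (h * lin_sum k n ^+ m) by rewrite /h mulrBl.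
rewrite (mpolyE h) big_seq; apply: (big_ind (in_power_ideal d)).
- exact: ip_0.
- exact: ip_add.
move=> mu Hmu.
case: (boolP [exists j, d j <= mu j]%N) => [/existsP [j hj]|hne]; first exact: ip_mon hj.
exfalso.
have hmuf : forall j, (mu j < d j)%N.
  move=> j; rewrite ltnNge; apply/negP => hj; move/negP: hne; apply.
  by apply/existsP; exists j.
pose P a := has (fun nu => jfree d j0 nu && (nu j0 == a)) (msupp h).
have exP : exists a, P a.
  exists (mu j0); apply/hasP; exists mu => //; rewrite eqxx andbT.
  by apply/jfreeP => j _; apply: hmuf.
have bound : forall a, P a -> (a <= i)%N.
  move=> a /hasP [nu hnu /andP [_ /eqP <-]].
  have := dhomog_mf hh hnu; rewrite /= => <-; rewrite mdegE (bigD1 j0) //=; lia.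
case: (ex_maxnP exP bound) => a Pa amax.
have aI := bound a Pa.
case/hasP: Pa => nu hnu /andP [hfree /eqP ha].
have hz : forall nu', jfree d j0 nu' -> (a < nu' j0)%N -> h@_nu' = 0.
  move=> nu' h1 h2; apply/eqP; rewrite mcoeff_eq0; apply/negP => hin.
  have : P (nu' j0) by apply/hasP; exists nu' => //; rewrite h1 eqxx.
  move/amax; lia.
have [e _] := iterL hfree ha hz m.
have := ip_coef0 HI (mu := (nu + U_(j0) *+ m)%MM).
rewrite e => H0; move: hnu; rewrite mcoeff_msupp H0 ?eqxx // => j.
rewrite mnmDE mulmnE mnm1E; case: (eqVneq j0 j) => [<-|hj].
  rewrite mul1n ha; lia.
rewrite mul0n addn0; move/jfreeP: hfree; apply; by rewrite eq_sym.
Qed.
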